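(* Let $G$ be a graph, $k$ a positive integer, and $V_1,\dots,V_t$ a partition of $V(G)$ into types as described in the context. If $G$ has a star coloring using at most $k$ colors, then the integer program $\mathrm{ILP}(G,k,V_1,\dots,V_t)$ described in the context has a feasible assignment.
   Context: All graphs are finite, simple, undirected and connected. A star coloring of $G$ with at most $k$ colors is a map $f:V(G)\to\{1,\dots,k\}$ with $f(u)\neq f(v)$ for every edge $uv$ such that every path on four vertices (not necessarily induced) receives at least three distinct colors. Two vertices $u,v$ have the same type if $N(u)\setminus\{v\}=N(v)\setminus\{u\}$; $V_1,\dots,V_t$ is a partition of $V(G)$ into nonempty sets in each of which all vertices pairwise have the same type. Then each $G[V_i]$ is a clique or an independent set; $V_i$ is called a clique type if $G[V_i]$ is complete and an independent type if $G[V_i]$ has no edges. For $i\neq j$, either every vertex of $V_i$ is adjacent to every vertex of $V_j$ (write $V_j\in adj(V_i)$) or there are no edges between them. For $A\subseteq[t]$ let $T_A=\{V_i: i\in A\}$. The program $\mathrm{ILP}(G,k,V_1,\dots,V_t)$ has one integer variable $n_A$ for every $A\subseteq[t]$ and the following constraints: (C0) $n_A=0$ (the variable is discarded) whenever $T_A$ contains two types $V_i,V_j$ with $V_j\in adj(V_i)$; (C1) $\sum_{A\subseteq[t]} n_A\le k$; (C2) for each clique type $V_i$: $\sum_{A: V_i\in T_A} n_A=|V_i|$; (C3) for each independent type $V_i$: $1\le \sum_{A:V_i\in T_A} n_A\le \min\{k,|V_i|\}$; (C4) for every four distinct types $V_{i_1},V_{i_2},V_{i_3},V_{i_4}$ with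 $V_{i_1},V_{i_3}\in adj(V_{i_2})$ and $V_{i_4}\in adj(V_{i_3})$: if $\sum_{A: V_{i_1},V_{i_3}\in T_A} n_A\ge 1$ then $\sum_{B: V_{i_2},V_{i_4}\in T_B} n_B=0$; (C5) for every three distinct types $V_{i_1},V_{i_2},V_{i_3}$ with $V_{i_1}$ an independent type and $V_{i_2},V_{i_3}\in adj(V_{i_1})$: if $\sum_{A:V_{i_1}\in T_A} n_A<|V_{i_1}|$ then $\sum_{B: V_{i_2},V_{i_3}\in T_B} n_B=0$; (C6) for every two distinct independent types $V_{i_1},V_{i_2}$ with $V_{i_1}\in adj(V_{i_2})$: if $\sum_{A:V_{i_1}\in T_A} n_A<|V_{i_1}|$ then $\sum_{B:V_{i_2}\in T_B} n_B=|V_{i_2}|$, and symmetrically with $i_1,i_2$ swapped; (C7) $n_A\ge 0$ for all $A\subseteq[t]$. A feasible assignment is an assignment of integer values to all $n_A$ satisfying (C0)–(C7). *)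

(* Defs.v *)
From mathcomp Require Import all_boot all_order all_algebra.
Set Implicit Arguments. Unset Strict Implicit. Unset Printing Implicit Defensive.
Import Order.TTheory GRing.Theory Num.Theory.

Definition simple_graph (V : finType) (e : rel V) : Prop :=
  irreflexive e /\ symmetric e.

Definition connected_graph (V : finType) (e : rel V) : Prop :=
  forall u v : V, connect e u v.

Definition star_coloring (V : finType) (e : rel V) (k : nat) (f : V -> 'I_k) : Prop :=
  (forall u v, e u v -> f u != f v) /\
  (forall a b c d : V, uniq [:: a; b; c; d] -> e a b -> e b c -> e c d ->
     2 < #|[set f a; f b; f c; f d]|).

Definition same_type (V : finType) (e : rel V) (u v : V) : Prop :=
  [set w | e u w] :\ v = [set w | e v w] :\ u.

(* p assigns to each vertex its part; parts V_i = p^-1(i), i : 'I_t. *)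
Definition part (V : finType) (t : nat) (p : V -> 'I_t) (i : 'I_t) : {set V} :=
  [set v | p v == i].

Definition type_partition (V : finType) (e : rel V) (t : nat) (p : V -> 'I_t) : Prop :=
  (forall i : 'I_t, part p i != set0) /\
  (forall u v : V, p u = p v -> same_type e u v).

Definition clique_type (V : finType) (e : rel V) (t : nat) (p : V -> 'I_t) (i : 'I_t) : Prop :=
  forall u v, u \in part p i -> v \in part p i -> u != v -> e u v.

Definition indep_type (V : finType) (e : rel V) (t : nat) (p : V -> 'I_t) (i : 'I_t) : Prop :=
  forall u v, u \in part p i -> v \in part p i -> ~~ e u v.

Definition adjT (V : finType) (e : rel V) (t : nat) (p : V -> 'I_t) (i j : 'I_t) : Prop :=
  i != j /\ forall u v, u \in part p i -> v \in part p j -> e u v.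

Local Open Scope ring_scope.

Definition sumT (t : nat) (n : {set 'I_t} -> int) (S : {set 'I_t}) : int :=
  \sum_(A : {set 'I_t} | S \subset A) n A.

Definition ILP_feasible (V : finType) (e : rel V) (k t : nat) (p : V -> 'I_t)
  (n : {set 'I_t} -> int) : Prop :=
  (forall A : {set 'I_t}, (exists i j, [/\ i \in A, j \in A & adjT e p i j]) -> n A = 0) /\
  (\sum_(A : {set 'I_t}) n A <= k%:Z) /\
  (forall i, clique_type e p i -> sumT n [set i] = #|part p i|%:Z) /\
  (forall i, indep_type e p i ->
     1 <= sumT n [set i] /\ sumT n [set i] <= (minn k #|part p i|)%:Z) /\
  (forall i1 i2 i3 i4 : 'I_t, uniq [:: i1; i2; i3; i4] ->
     adjT e p i2 i1 -> adjT e p i2 i3 -> adjT e p i3 i4 ->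
     1 <= sumT n [set i1; i3] -> sumT n [set i2; i4] = 0) /\
  (forall i1 i2 i3 : 'I_t, uniq [:: i1; i2; i3] -> indep_type e p i1 ->
     adjT e p i1 i2 -> adjT e p i1 i3 ->
     sumT n [set i1] < #|part p i1|%:Z -> sumT n [set i2; i3] = 0) /\
  (* C6 (the symmetric version is the instance with i1, i2 swapped) *)
  (forall i1 i2 : 'I_t, i1 != i2 -> indep_type e p i1 -> indep_type e p i2 ->
     adjT e p i2 i1 ->
     sumT n [set i1] < #|part p i1|%:Z -> sumT n [set i2] = #|part p i2|%:Z) /\
  (forall A, 0 <= n A).

(* Main.v *)
Require Import Defs.
From mathcomp Require Import all_boot all_order all_algebra.
Set Implicit Arguments. Unset Strict Implicit. Unset Printing Implicit Defensive.

Section Helpers.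
Local Open Scope ring_scope.
Variables (V : finType) (e : rel V) (k t : nat) (p : V -> 'I_t) (f : V -> 'I_k).

Definition Tc (c : 'I_k) : {set 'I_t} :=
  [set i | [exists v, (p v == i) && (f v == c)]].

Definition nA (A : {set 'I_t}) : int := (#|[set c | Tc c == A]|)%:Z.

Lemma sumT_eq S : sumT nA S = (#|[set c | S \subset Tc c]|)%:Z.
Proof.
rewrite /sumT /nA -(big_morph Posz PoszD (erefl 0%Z)); congr Posz.
rewrite -sum1_card.
rewrite (partition_big Tc (fun A => S \subset A)) /=; last first.
  by move=> c; rewrite inE.
apply: eq_bigr => A SA; rewrite -sum1_card.
by apply: eq_bigl => c; rewrite !inE; case: eqP => [->|]; rewrite ?SA ?andbF.
Qed.

Lemma inTc i c : (i \in Tc c) = (c \in f @: part p i).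
Proof.
rewrite inE; apply/existsP/imsetP.
  by case=> v /andP[/eqP pv /eqP fv]; exists v; rewrite // inE pv.
by case=> v; rewrite inE => /eqP pv ->; exists v; rewrite pv !eqxx.
Qed.

Lemma sum1_eq i : sumT nA [set i] = (#|f @: part p i|)%:Z.
Proof.
rewrite sumT_eq; congr Posz; apply: eq_card => c.
by rewrite inE sub1set inTc.
Qed.

Lemma sum2_gt0 i j : (0 < #|[set c | [set i; j] \subset Tc c]|)%N ->
  exists c, c \in f @: part p i /\ c \in f @: part p j.
Proof.
case/card_gt0P => c; rewrite inE subUset !sub1set !inTc => /andP[??].
by exists c.
Qed.

Lemma sum2_0 i j : (forall c, c \in f @: part p i -> c \in f @: part p j -> False) ->
  sumT nA [set i; j] = 0%Z.
Proof.
move=> H; rewrite sumT_eq; apply/eqP; rewrite eqz_nat; apply/eqP.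
apply/eqP; rewrite cards_eq0; apply/eqP/setP => c; rewrite !inE subUset !sub1set !inTc.
by apply/negbTE/negP => /andP[a b]; case: (H c a b).
Qed.

Lemma neq_part u v i j : u \in part p i -> v \in part p j -> i != j -> u != v.
Proof.
rewrite !inE => /eqP <- /eqP <-; apply: contra => /eqP -> //.
Qed.

Lemma card4_le2 (x y : 'I_k) : (#|[set x; y; x; y]| <= 2)%N.
Proof.
have -> : [set x; y; x; y] = [set x; y].
  by apply/setP => z; rewrite !inE; case: (z == x); case: (z == y).
by rewrite cards2; case: (x != y).
Qed.

End Helpers.

Theorem lemma2 (V : finType) (e : rel V) (k t : nat) (p : V -> 'I_t) :
  simple_graph e -> connected_graph e -> (0 < k)%N ->
  type_partition e p ->
  (exists f : V -> 'I_k, star_coloring e f) ->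
  exists n : {set 'I_t} -> int, ILP_feasible e k p n.
Proof.
move=> [irr sym] _ _ [nonempty _] [f [prop star]].
have starF : forall a b c d, uniq [:: a; b; c; d] -> e a b -> e b c -> e c d ->
    f a = f c -> f b = f d -> False.
  move=> a b c d u ab bc cd fac fbd; have := star a b c d u ab bc cd.
  by rewrite fac fbd ltnNge card4_le2.
have adjE : forall i j u v, adjT e p i j -> u \in part p i -> v \in part p j -> e u v.
  by move=> i j u v [_ H]; apply: H.
have imP : forall i c, c \in f @: part p i -> exists2 v, v \in part p i & f v = c.
  by move=> i c /imsetP[v ? ->]; exists v.
exists (@nA V k t p f); split; [|split; [|split; [|split; [|split; [|split; [|split]]]]]].
-
  move=> A [i [j [iA jA aij]]]; apply/eqP; rewrite /nA eqz_nat cards_eq0; apply/eqP.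
  apply/setP => c; rewrite !inE; apply/negbTE/negP => /eqP TA.
  move: iA jA; rewrite -TA !inTc => /imP[u ui fu] /imP[v vj fv].
  by have := prop u v (adjE _ _ _ _ aij ui vj); rewrite fu fv eqxx.
-
  have H := sumT_eq p f set0; rewrite /sumT (eq_bigl (fun _ => true)) in H;
    last by move=> A; rewrite sub0set.
  rewrite H.
  rewrite lez_nat (eq_card (B := predT)) ?card_ord // => c.
  by rewrite inE sub0set.
-
  move=> i cl; rewrite sum1_eq; congr Posz; apply/eqP/imset_injP => u v ui vi fuv.
  case: (eqVneq u v) => // nuv.
  by have := prop u v (cl u v ui vi nuv); rewrite fuv eqxx.
-
  move=> i _; rewrite sum1_eq lez_nat; split.
    have /set0Pn[v vi] := nonempty i.
    by apply/card_gt0P; exists (f v); apply: imset_f.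
  rewrite leq_min leq_imset_card andbT.
  by apply: leq_trans (max_card _) _; rewrite card_ord.
-
  move=> i1 i2 i3 i4 u a21 a23 a34 h13.
  move: h13; rewrite sumT_eq lez_nat => /sum2_gt0 [c [/imP[a ai fa] /imP[c' ci fc]]].
  apply: sum2_0 => d /imP[b bi fb] /imP[d' di fd].
  move: u; rewrite /= !inE !negb_or => /andP[/and3P[n12 n13 n14] /andP[/andP[n23 n24] /andP[n34 _]]].
  apply: (starF a b c' d').
  + rewrite /= !inE !negb_or.
    rewrite (neq_part ai bi n12) (neq_part ai ci n13) (neq_part ai di n14).
    by rewrite (neq_part bi ci n23) (neq_part bi di n24) (neq_part ci di n34).
  + by rewrite sym (adjE _ _ _ _ a21 bi ai).
  + exact: (adjE _ _ _ _ a23 bi ci).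
  + exact: (adjE _ _ _ _ a34 ci di).
  + by rewrite fa fc.
  + by rewrite fb fd.
-
  move=> i1 i2 i3 u ind a12 a13; rewrite sum1_eq ltz_nat => lt.
  apply: sum2_0 => d /imP[x xi fx] /imP[y yi fy].
  move: u; rewrite /= !inE !negb_or => /andP[/andP[n12 n13] /andP[n23 _]].
  suff : #|f @: part p i1| == #|part p i1| by rewrite (ltn_eqF lt).
  apply/imset_injP => a b ai bi fab; case: (eqVneq a b) => // nab.
  exfalso; apply: (starF x a y b).
  + rewrite /= !inE !negb_or.
    rewrite eq_sym (neq_part ai xi n12) (neq_part xi yi n23) eq_sym (neq_part bi xi n12).
    by rewrite nab (neq_part ai yi n13) eq_sym (neq_part bi yi n13).
  + by rewrite sym (adjE _ _ _ _ a12 ai xi).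
  + exact: (adjE _ _ _ _ a13 ai yi).
  + by rewrite sym (adjE _ _ _ _ a13 bi yi).
  + by rewrite fx fy.
  + by [].
-
  move=> i1 i2 n12 ind1 ind2 a21; rewrite !sum1_eq ltz_nat => lt; congr Posz.
  apply/eqP/imset_injP => x y xi yi fxy; case: (eqVneq x y) => // nxy.
  exfalso.
  suff : #|f @: part p i1| == #|part p i1| by rewrite (ltn_eqF lt).
  apply/imset_injP => a b ai bi fab; case: (eqVneq a b) => // nab.
  exfalso; apply: (starF a x b y).
  + rewrite /= !inE !negb_or.
    rewrite (neq_part ai xi n12) nab (neq_part ai yi n12).
    by rewrite eq_sym (neq_part bi xi n12) nxy (neq_part bi yi n12).
  + by rewrite sym (adjE _ _ _ _ a21 xi ai).
  + exact: (adjE _ _ _ _ a21 xi bi).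
  + by rewrite sym (adjE _ _ _ _ a21 yi bi).
  + by [].
  + by [].
- by move=> A.
Qed.
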